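(* The space $X=\omega^*\times 2^\omega$ (with the product topology) is a compact $nwd$-separable space which is not $d$-separable.
   Context: $\omega^*=\beta\omega\setminus\omega$ is the Čech–Stone remainder of $\omega$, and $2^\omega$ is the Cantor space. A space is $d$-separable if it has a dense subset which is a countable union of discrete subspaces; it is $nwd$-separable if it has a dense subset which is a countable union of nowhere dense subsets. *)

(* Defs.v *)
From HB Require Import structures.
From mathcomp Require Import all_boot all_classical all_reals all_analysis.
Set Implicit Arguments. Unset Strict Implicit. Unset Printing Implicit Defensive.
Local Open Scope classical_set_scope.

(** beta omega is modelled (as usual) as the Stone space of ultrafilters on
    nat, with the topology generated by the sets  A^ = [set p | p A], A ⊆ ω.
    omega^* = beta omega \ omega is the subspace of free (non-principal)
    ultrafilters, i.e. ultrafilters containing no finite set. *)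
Definition free_ultrafilter (F : set_system nat) : Prop :=
  UltraFilter F /\ (forall A : set nat, finite_set A -> ~ F A).

Definition omega_star : Type := {F : set_system nat | free_ultrafilter F}.

HB.instance Definition _ := gen_eqMixin omega_star.
HB.instance Definition _ := gen_choiceMixin omega_star.

Definition omega_star_basic (A : set nat) : set omega_star :=
  [set p | proj1_sig p A].

HB.instance Definition _ :=
  isSubBaseTopological.Build omega_star [set: set nat] omega_star_basic.

Definition discrete_subspace (T : topologicalType) (S : set T) : Prop :=
  forall x, S x -> exists U : set T, [/\ open U, U x & U `&` S = [set x]].

Definition nowhere_dense (T : topologicalType) (S : set T) : Prop :=
  interior (closure S) = set0.

Definition d_separable (T : topologicalType) : Prop :=
  exists D : nat -> set T,
    (forall n, discrete_subspace (D n)) /\ dense (\bigcup_n D n).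

Definition nwd_separable (T : topologicalType) : Prop :=
  exists D : nat -> set T,
    (forall n, nowhere_dense (D n)) /\ dense (\bigcup_n D n).

(* Main.v *)
Require Import Defs.
From HB Require Import structures.
From mathcomp Require Import all_boot all_classical all_reals all_analysis.
Local Open Scope classical_set_scope.
From mathcomp Require finmap.

Lemma osU (p : omega_star) : UltraFilter (proj1_sig p).
Proof. exact: (proj1 (proj2_sig p)). Qed.

Lemma osP (p : omega_star) : ProperFilter (proj1_sig p).
Proof. exact: (@ultra_proper _ _ (osU p)). Qed.

Lemma osF (p : omega_star) : Filter (proj1_sig p).
Proof. exact: (@filter_filter _ _ (osP p)). Qed.

Lemma os_free (p : omega_star) A : finite_set A -> ~ proj1_sig p A.
Proof. exact: (proj2 (proj2_sig p)). Qed.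

Lemma os_open_basic A : open (omega_star_basic A).
Proof.
exists [set omega_star_basic A].
  by move=> _ ->; apply: finI_from1.
apply/seteqP; split=> q.
  by move=> [_ -> ].
by move=> H; exists (omega_star_basic A).
Qed.

Module OSN.
Import finmap.
Lemma os_nbhs (p : omega_star) O : nbhs p O ->
  exists C, proj1_sig p C /\ omega_star_basic C `<=` O.
Proof.
move=> [B [[D' sD' <-] [X D'X Xp] sBO]].
have [F0 _ FX0] := sD' X D'X.
pose F : {fset set nat} := F0.
have FX : \bigcap_(i in [set` F]) omega_star_basic i = X := FX0.
have Xp' : X p := Xp.
have XO : forall q, X q -> O q.
  by move=> q Xq; apply: sBO; exists X.
clear sBO Xp.
exists (\bigcap_(i in [set` F]) i); split.
  apply: (@filter_bigI _ _ F id (proj1_sig p) (osF p)) => i iF.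
  by move: Xp'; rewrite -FX; apply.
move=> q qC; apply: XO; rewrite -FX => i iF.
have := @filterS _ _ (osF q) (\bigcap_(i in [set` F]) i) i.
by apply => // n; apply.
Qed.
End OSN.
Import OSN.


Lemma os_nbhs_basic (p : omega_star) C : proj1_sig p C -> nbhs p (omega_star_basic C).
Proof.
move=> pC; rewrite nbhsE; exists (omega_star_basic C) => //; split => //.
exact: os_open_basic.
Qed.

Definition unb (A : set nat) := forall n, exists m, (n <= m)%N /\ A m.

Module FB.
Import finmap.
Lemma finite_bounded (A : set nat) : finite_set A -> exists n, forall m, A m -> (m < n)%N.
Proof.
move=> fA; exists (\max_(i <- fset_set A) i).+1 => m Am.
rewrite ltnS; apply: (@leq_bigmax_seq _ _ xpredT id m) => //.
have : [set` fset_set A] m by rewrite fset_setK.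
by [].
Qed.
End FB.
Import FB.


Lemma bounded_finite n (A : set nat) : (forall m, A m -> (m < n)%N) -> finite_set A.
Proof.
move=> H; apply: (sub_finite_set _ (finite_II n)) => m /H.
by [].
Qed.

Lemma os_unb (p : omega_star) A : proj1_sig p A -> unb A.
Proof.
move=> pA n; apply: contrapT => H; apply: (os_free p A) => //.
apply: (@bounded_finite n) => m Am; rewrite ltnNge; apply/negP => nm.
by apply: H; exists m.
Qed.

Lemma os_compl (p : omega_star) A : ~ proj1_sig p A -> proj1_sig p (~` A).
Proof. by case: (in_ultra_setVsetC A (osU p)). Qed.

Lemma os_notboth (p : omega_star) A : proj1_sig p A -> ~ proj1_sig p (~` A).
Proof.
move=> pA pnA; have := @filterI _ _ (osF p) _ _ pA pnA.
by rewrite setICr; apply: (@filter_not_empty _ _ (osP p)).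
Qed.

Lemma os_tail (p : omega_star) n : proj1_sig p [set m | (n <= m)%N].
Proof.
have : ~ proj1_sig p (~` [set m | (n <= m)%N]).
  apply: os_free; apply: (@bounded_finite n) => m /=.
  by rewrite ltnNge => /negP.
by move/os_compl; rewrite setCK.
Qed.

Lemma exists_os (C : set nat) : unb C -> exists p : omega_star, proj1_sig p C.
Proof.
move=> uC.
pose F := filter_from [set: nat] (fun n => C `&` [set m | (n <= m)%N]).
have FF : ProperFilter F.
  apply: filter_from_proper.
    apply: filter_from_filter; first by exists 0%N.
    move=> i j _ _; exists (maxn i j) => // m [Cm]; rewrite /= geq_max => /andP[im jm].
    by split; split.
  by move=> i _; have [m [im Cm]] := uC i; exists m.
have [G [GU FG]] := ultraFilterLemma FF.
have fG : free_ultrafilter G.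
  split => // A fA GA.
  have [n nA] := finite_bounded _ fA.
  have Gt : G (C `&` [set m | (n <= m)%N]) by apply: FG; exists n.
  have := @filterI _ _ (@filter_filter _ _ (@ultra_proper _ _ GU)) _ _ GA Gt.
  suff -> : A `&` (C `&` [set m | (n <= m)%N]) = set0.
    by apply: (@filter_not_empty _ _ (@ultra_proper _ _ GU)).
  apply/seteqP; split => // m [/nA]; rewrite ltnNge => /negP nm [_ /= mm].
  by [].
exists (exist _ G fG) => /=.
by apply: FG; exists 0%N => // m [Cm _].
Qed.

Lemma unb_seq (A : nat -> set nat) : (forall k, unb (A k)) ->
  exists a : nat -> nat, (forall k, A k (a k)) /\ (forall i j, (i < j)%N -> (a i < a j)%N).
Proof.
move=> uA.
have nxt : forall k n, {m | (n <= m)%N /\ A k m} by move=> k n; apply: cid; exact: uA.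
pose a := fix a k := match k with 0 => sval (nxt 0%N 0%N) | k'.+1 => sval (nxt k'.+1 (a k').+1) end.
exists a; split.
  by case=> [|k]; [exact: (proj2 (svalP (nxt _ _)))|exact: (proj2 (svalP (nxt _ _)))].
apply: (@homo_ltn _ a (fun x y => (x < y)%N)); first by move=> y x z; apply: ltn_trans.
by move=> i; exact: (proj1 (svalP (nxt _ _))).
Qed.

Lemma seq_ge (a : nat -> nat) : (forall i j, (i < j)%N -> (a i < a j)%N) -> forall k, (k <= a k)%N.
Proof.
move=> ha; elim=> [//|k IH]; apply: leq_ltn_trans IH _; exact: ha.
Qed.

Lemma seq_inj (a : nat -> nat) : (forall i j, (i < j)%N -> (a i < a j)%N) -> injective a.
Proof.
move=> ha i j aij; case: (ltngtP i j) => // h.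
  by have := ha _ _ h; rewrite aij ltnn.
by have := ha _ _ h; rewrite aij ltnn.
Qed.

Lemma os_split (p : omega_star) C : unb C -> exists C', C' `<=` C /\ unb C' /\ ~ proj1_sig p C'.
Proof.
move=> uC; have [c [Cc hc]] := unb_seq (fun _ => C) (fun _ => uC).
pose C1 := [set m | exists k, m = c k.*2].
pose C2 := [set m | exists k, m = c k.*2.+1].
have s1 : C1 `<=` C by move=> m [k ->].
have s2 : C2 `<=` C by move=> m [k ->].
have u1 : unb C1.
  move=> n; exists (c n.*2); split; last by exists n.
  have := seq_ge _ hc n.*2; apply: leq_trans.
  by rewrite -addnn; exact: leq_addr.
have u2 : unb C2.
  move=> n; exists (c n.*2.+1); split; last by exists n.
  have := seq_ge _ hc n.*2.+1; apply: leq_trans.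
  by rewrite -addnn; apply: leq_trans (leq_addr n n) _.
have d12 : C1 `&` C2 = set0.
  apply/seteqP; split => // m [[k ->] [j]] /(seq_inj _ hc) /(congr1 odd).
  by rewrite /= !odd_double.
case: (pselect (proj1_sig p C1)) => p1; last by exists C1.
case: (pselect (proj1_sig p C2)) => p2; last by exists C2.
exfalso; have := @filterI _ _ (osF p) _ _ p1 p2.
by rewrite d12; apply: (@filter_not_empty _ _ (osP p)).
Qed.

Lemma avoid_one (E : set omega_star) A : discrete_subspace E -> unb A ->
  exists A', A' `<=` A /\ unb A' /\ forall q : omega_star, proj1_sig q A' -> ~ E q.
Proof.
move=> dE uA.
case: (pselect (exists q : omega_star, proj1_sig q A /\ E q)) => [[q [qA Eq]]|none]; last first.
  by exists A; split => //; split => // q qA Eq; apply: none; exists q.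
have [U [oU Uq UE]] := dE q Eq.
have /os_nbhs [C [qC CU]] : nbhs q U by apply: open_nbhs_nbhs; split.
have qCA : proj1_sig q (C `&` A) by apply: (@filterI _ _ (osF q)).
have [C' [sC' [uC' nqC']]] := os_split q (C `&` A) (os_unb q _ qCA).
exists C'; split; first by move=> m /sC' [].
split => // r rC' Er.
have Ur : U r.
  apply: CU; apply: (@filterS _ _ (osF r) C') rC' => m /sC' [].
  by [].
have : (U `&` E) r by split.
by rewrite UE => /= rq; move: rC'; rewrite rq.
Qed.

Lemma avoid_all (E : nat -> set omega_star) A0 : (forall k, discrete_subspace (E k)) -> unb A0 ->
  exists B, unb B /\ forall q : omega_star, proj1_sig q B -> proj1_sig q A0 /\ forall k, ~ E k q.
Proof.
move=> dE uA0.
have step : forall k (A : {A : set nat | unb A}), {A' : {A : set nat | unb A} |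
    sval A' `<=` sval A /\ forall q : omega_star, proj1_sig q (sval A') -> ~ E k q}.
  move=> k [A uA]; apply: cid.
  have [A' [s [u h]]] := avoid_one (E k) A (dE k) uA.
  by exists (exist _ A' u).
pose S := fix S k := match k with
  | 0 => sval (step 0%N (exist _ A0 uA0))
  | k'.+1 => sval (step k'.+1 (S k')) end.
pose Ak k := sval (S k).
have P1 : forall k q, proj1_sig q (Ak k) -> ~ E k q.
  by case=> [|k] q; [exact: (proj2 (svalP (step _ _)))|exact: (proj2 (svalP (step _ _)))].
have P0 : Ak 0%N `<=` A0 by exact: (proj1 (svalP (step _ _))).
have P2 : forall k, Ak k.+1 `<=` Ak k by move=> k; exact: (proj1 (svalP (step _ _))).
have P3 : forall i j, (i <= j)%N -> Ak j `<=` Ak i.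
  move=> i; elim=> [|j IH]; first by rewrite leqn0 => /eqP ->.
  rewrite leq_eqVlt => /orP [/eqP -> //|]; rewrite ltnS => /IH.
  by apply: subset_trans; apply: P2.
have uAk : forall k, unb (Ak k) by move=> k; exact: (svalP (S k)).
have [a [aA ha]] := unb_seq Ak uAk.
exists [set m | exists k, m = a k]; split.
  by move=> n; exists (a n); split; [exact: seq_ge|exists n].
move=> q qB.
have qAk : forall k, proj1_sig q (Ak k).
  move=> k.
  have := @filterI _ _ (osF q) _ _ qB (os_tail q (a k)).
  apply: (@filterS _ _ (osF q)) => m [[j ->]] /= akj.
  apply: (P3 k j); last exact: aA.
  by rewrite leqNgt; apply/negP => /ha; rewrite ltnNge akj.
split; first by apply: (@filterS _ _ (osF q) _ _ P0); apply: qAk.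
by move=> k; apply: P1; apply: qAk.
Qed.

Lemma basicI A B : omega_star_basic (A `&` B) = omega_star_basic A `&` omega_star_basic B.
Proof.
apply/seteqP; split => q /=.
  by move=> h; split; apply: (@filterS _ _ (osF q) _ _ _ h) => m [].
by move=> [hA hB]; apply: (@filterI _ _ (osF q)).
Qed.

Lemma basicC A : omega_star_basic (~` A) = ~` omega_star_basic A.
Proof.
apply/seteqP; split => q /=.
  by move=> h hA; exact: (os_notboth q A hA h).
by move=> h; apply: os_compl.
Qed.

Lemma basic0 : omega_star_basic set0 = set0.
Proof.
apply/seteqP; split => q //=; exact: (@filter_not_empty _ _ (osP q)).
Qed.

Lemma basicT : omega_star_basic setT = setT.
Proof. apply/seteqP; split => q //= _; exact: (@filterT _ _ (osF q)). Qed.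

Lemma basicS A B : A `<=` B -> omega_star_basic A `<=` omega_star_basic B.
Proof. by move=> AB q; apply: (@filterS _ _ (osF q)). Qed.

Lemma os_compact : compact [set: omega_star].
Proof.
rewrite compact_ultra => F FU _.
have FP : ProperFilter F := @ultra_proper _ _ FU.
have FF : Filter F := @filter_filter _ _ FP.
pose p0 := [set A | F (omega_star_basic A)].
have p0F : Filter p0.
  split.
  - by rewrite /p0 /= basicT; apply: filterT.
  - by move=> A B hA hB; rewrite /p0 /= basicI; apply: filterI.
  - by move=> A B AB; exact: (filterS (basicS A B AB)).
have p0P : ProperFilter p0.
  by split => //; rewrite /p0 /= basic0; apply: filter_not_empty.
have p0U : UltraFilter p0.
  split => // G GP p0G; apply/seteqP; split; last exact: p0G.
  move=> A GA; apply: contrapT => np0A.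
  have : F (~` omega_star_basic A).
    by case: (in_ultra_setVsetC (omega_star_basic A) FU).
  rewrite -basicC => /(p0G (~` A)) GnA.
  have := @filterI _ _ (@filter_filter _ _ GP) _ _ GA GnA.
  by rewrite setICr; apply: (@filter_not_empty _ _ GP).
have fr : free_ultrafilter p0.
  split => // A fA; rewrite /p0 /=.
  suff -> : omega_star_basic A = set0 by apply: filter_not_empty.
  by apply/seteqP; split => q // qA; exact: (os_free q A fA qA).
exists (exist _ p0 fr); split => //.
move=> O /os_nbhs [C [pC CO]].
by apply: filterS CO pC.
Qed.
Definition cyl (x : cantor_space) n : set cantor_space := [set y | forall i, (i < n)%N -> y i = x i].
Lemma cyl_in (x : cantor_space) W : nbhs x W -> exists n, cyl x n `<=` W.
Proof.
move=> xW; apply: contrapT => H.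
pose F := filter_from [set: nat] (fun n => cyl x n `&` ~` W).
have FP : ProperFilter F.
  apply: filter_from_proper.
    apply: filter_from_filter; first by exists 0%N.
    move=> i j _ _; exists (maxn i j) => // y [cy nW]; split; split => //.
    - by move=> k ki; apply: cy; apply: leq_trans ki (leq_maxl _ _).
    - by move=> k ki; apply: cy; apply: leq_trans ki (leq_maxr _ _).
  move=> n _; apply: contrapT => h; apply: H; exists n => y cy.
  by apply: contrapT => nW; apply: h; exists y.
have : F --> x.
  rewrite /cantor_space.
  apply/(@cvg_sup _ _ (fun i => Topological.class (initial_topology (fun f : (forall i, bool) => f i)))).
  move=> i A [B [[C oC <-] Bx BA]].
  exists i.+1 => // y [cy _]; apply: BA => /=.
  by rewrite (cy i (ltnSn i)).
move=> Fx; have [n _ nW] := Fx W xW.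
have [y [cy Wy]] : (cyl x n `&` ~` W) !=set0.
  by apply: contrapT => h; apply: H; exists n => y cy; apply: contrapT => nWy; apply: h; exists y.
by apply: (Wy); apply: nW; split.
Qed.

Lemma coord_nbhs (x : cantor_space) i : nbhs x [set y : cantor_space | y i = x i].
Proof.
have := @proj_continuous nat (fun _ => bool) i x.
move=> /(_ [set x i]); apply.
by apply/principal_filterP.
Qed.

Lemma cyl_nbhs (x : cantor_space) n : nbhs x (cyl x n).
Proof.
elim: n => [|n IH].
  by apply: (@filterS _ _ _ setT); [move=> y _ i|exact: filterT].
apply: (@filterS _ _ _ (cyl x n `&` [set y : cantor_space | y n = x n])); last first.
  exact: (filterI IH (coord_nbhs x n)).
move=> y [cy yn] i.
rewrite ltnS leq_eqVlt => /orP [/eqP -> //|]; exact: cy.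
Qed.

Definition qs (n : nat) : cantor_space := fun i => nth false (odflt [::] (unpickle n)) i.

Lemma qs_cyl (x : cantor_space) m : exists n, cyl x m (qs n).
Proof.
exists (pickle [seq x i | i <- iota 0 m]) => i im.
rewrite /qs pickleK /= (nth_map 0%N) ?size_iota // nth_iota //.
Qed.

Lemma prod_nbhs_in (z : omega_star * cantor_space) O : nbhs z O ->
  exists U W, [/\ nbhs z.1 U, nbhs z.2 W & U `*` W `<=` O].
Proof. by move=> [[U W] [hU hW] sUW]; exists U, W. Qed.

Lemma prod_nbhs_mk (z : omega_star * cantor_space) U W :
  nbhs z.1 U -> nbhs z.2 W -> nbhs z (U `*` W).
Proof. by move=> hU hW; exists (U, W). Qed.

Definition prefix (x : cantor_space) m := [seq x i | i <- iota 0 m].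

Lemma prefix_cyl (x y : cantor_space) m : prefix y m = prefix x m -> cyl x m y.
Proof.
move=> h i im; have := congr1 (fun s => nth false s i) h.
by rewrite /prefix /= !(nth_map 0%N) ?size_iota // nth_iota.
Qed.

Lemma cyl_prefix (x y : cantor_space) m : cyl x m y -> prefix y m = prefix x m.
Proof.
move=> h; apply/eq_in_map => i; rewrite mem_iota add0n => /andP [_ im].
exact: h.
Qed.

Lemma X_compact : compact [set: (omega_star * cantor_space)%type].
Proof.
rewrite -setXTT; apply: compact_setX; [exact: os_compact|exact: cantor_space_compact].
Qed.

Lemma X_nwd : nwd_separable (omega_star * cantor_space)%type.
Proof.
exists (fun n => [set z : omega_star * cantor_space | z.2 = qs n]); split.
  move=> n; apply/seteqP; split => // z /= hz.
  have [U [W [hU hW UWc]]] := prod_nbhs_in _ _ hz.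
  have [m Wm] := cyl_in _ _ hW.
  pose y : cantor_space := fun i => if i == m then ~~ qs n m else z.2 i.
  have yc : cyl z.2 m y.
    by move=> i im; rewrite /y; case: eqP => // eim; move: im; rewrite eim ltnn.
  have := UWc (z.1, y) (conj (nbhs_singleton hU) (Wm _ yc)).
  rewrite closureEnbhs => /= /(_ [set z : omega_star * cantor_space | z.2 = qs n]
     (setT `*` [set v : cantor_space | v m = y m])).
  case.
  - by [].
  - by apply: (prod_nbhs_mk (z.1, y)); [exact: filterT|exact: coord_nbhs].
  move=> v [/= vq [_ /= vm]].
  by move: vm; rewrite vq /y eqxx; case: (qs n m).
move=> O [z Oz] oO.
have hz : nbhs z O by apply: open_nbhs_nbhs; split.
have [U [W [hU hW UWc]]] := prod_nbhs_in _ _ hz.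
have [m Wm] := cyl_in _ _ hW.
have [n qn] := qs_cyl z.2 m.
exists (z.1, qs n); split; last by exists n.
by apply: UWc; split; [exact: nbhs_singleton|exact: Wm].
Qed.


Definition Eset (Dn : nat -> set (omega_star * cantor_space)) (n m : nat) (s : seq bool) : set omega_star :=
  [set p | exists x : cantor_space, [/\ Dn n (p, x), prefix x m = s &
     exists U : set omega_star, [/\ open U, U p & forall d, Dn n d -> U d.1 ->
        prefix d.2 m = s -> d = (p, x)]]].

Lemma Eset_discrete (Dn : nat -> set (omega_star * cantor_space)) n m s : discrete_subspace (Eset Dn n m s).
Proof.
move=> p [x [Dpx px [U [oU Up hU]]]].
exists U; split => //; apply/seteqP; split => r.
  move=> [Ur [x' [Drx rx _]]].
  by move: (hU (r, x') Drx Ur rx) => [-> _].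
by move=> /= ->; split => //; exists x; split => //; exists U.
Qed.

Lemma Eset_cover (Dn : nat -> set (omega_star * cantor_space)) (dD : forall n, discrete_subspace (Dn n)) d : forall n, Dn n d -> exists m, Eset Dn n m (prefix d.2 m) d.1.
Proof.
case: d => p x n Dd.
have [Oo [oO Od OD]] := dD n (p, x) Dd.
have hO : nbhs (p, x) Oo by apply: open_nbhs_nbhs; split.
have [U0 [W [hU hW UWc]]] := prod_nbhs_in _ _ hO.
have [m Wm] := cyl_in _ _ hW.
exists m; exists x; split => //.
exists (interior U0); split.
- exact: open_interior.
- exact: hU.
- move=> d Dd' Ud pd.
  have : (Oo `&` Dn n) d.
    split => //; case: d Dd' Ud pd => a b Dd' Ud pd; apply: UWc; split.
    + exact: interior_subset.
    + by apply: Wm; apply: prefix_cyl.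
  by rewrite OD.
Qed.

Definition Ek (Dn : nat -> set (omega_star * cantor_space)) (k : nat) : set omega_star :=
  match @unpickle (nat * nat * seq bool)%type k with
  | Some (n, m, s) => Eset Dn n m s
  | None => set0
  end.

Lemma Ek_discrete (Dn : nat -> set (omega_star * cantor_space)) k : discrete_subspace (Ek Dn k).
Proof.
rewrite /Ek; case: unpickle => [[[n m] s]|]; first exact: (Eset_discrete Dn).
by move=> p.
Qed.

Lemma not_dense (Dn : nat -> set (omega_star * cantor_space)) (dD : forall n, discrete_subspace (Dn n)) : ~ dense (\bigcup_n Dn n).
Proof.
move=> hd.
have uT : unb setT by move=> n; exists n.
have [B [uB hB]] := avoid_all (Ek Dn) setT (Ek_discrete Dn) uT.
have [q0 q0B] := exists_os B uB.
have := hd (omega_star_basic B `*` setT).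
case.
- by exists (q0, qs 0%N).
- rewrite openE => z [z1 _]; rewrite /interior /=.
  by apply: (prod_nbhs_mk z); [exact: os_nbhs_basic|exact: filterT].
move=> z [[zB _] [n _ Dz]].
have [m Em] := Eset_cover Dn dD z n Dz.
have [_ /(_ (pickle (n, m, prefix z.2 m)))] := hB z.1 zB.
by rewrite /Ek pickleK.
Qed.



Theorem mainTheorem2 :
  compact [set: (omega_star * cantor_space)%type] /\
  nwd_separable (omega_star * cantor_space)%type /\
  ~ d_separable (omega_star * cantor_space)%type.
Proof.
split; first exact: X_compact.
split; first exact: X_nwd.
move=> [Dn [dD hd]]; exact: (not_dense Dn dD hd).
Qed.
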